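(* Assume the standing assumptions (A1)–(A3). Then the optimal value of \[ (\overline{Aff})\quad\min_{x,\lambda,Y}\ c^Tx+\lambda\ \ \text{s.t.}\ \ x\in\mathcal X,\ \ \lambda g_1g_1^T-\tfrac12G(x)+\tfrac12H(Y)\in\mathrm{COP}(\widehat{\mathcal U}\times\mathbb R^m_+), \] with $\lambda\in\mathbb R$, $Y\in\mathbb R^{n_2\times k}$, equals $v^*_{Aff}$.
   Context: Data: $A\in\mathbb R^{m\times n_1}$, $B\in\mathbb R^{m\times n_2}$, $c\in\mathbb R^{n_1}$, $d\in\mathbb R^{n_2}$, $F\in\mathbb R^{m\times k}$, $\mathcal X\subseteq\mathbb R^{n_1}$ closed convex. $\widehat{\mathcal U}\subseteq\mathbb R_+\times\mathbb R^{k-1}$ is a closed, convex, full-dimensional cone and $\mathcal U:=\{u\in\widehat{\mathcal U}: u_1=1\}$, assumed nonempty and compact. $e_1\in\mathbb R^k$ first standard basis vector, $g_1:=(e_1;0)\in\mathbb R^{k+m}$. (RLP): $v^*_{RLP}:=\inf\{c^Tx+\sup_{u\in\mathcal U}d^Ty(u)\}$ over $x\in\mathcal X$ and maps $y:\mathcal U\to\mathbb R^{n_2}$ with $Ax+By(u)\ge Fu$ for all $u\in\mathcal U$. Standing assumptions: (A1) $\mathcal X,\widehat{\mathcal U}$ computationally tractable; (A2) (RLP) feasible; (A3) $v^*_{RLP}$ finite. The affine-policy value is $v^*_{Aff}:=\inf\{c^Tx+\sup_{u\in\mathcal U}d^TYu\}$ over $x\in\mathcal X$, $Y\in\mathbb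 R^{n_2\times k}$ with $Ax+BYu\ge Fu$ for all $u\in\mathcal U$. $G(x):=\begin{pmatrix}0&(F-Axe_1^T)^T\\ F-Axe_1^T&0\end{pmatrix}$, $H(Y):=\begin{pmatrix}-e_1d^TY-Y^Tde_1^T&(BY)^T\\ BY&0\end{pmatrix}$, both in $\mathcal S^{k+m}$. $\mathrm{COP}(\mathcal K):=\{M\in\mathcal S^n: z^TMz\ge0\ \forall z\in\mathcal K\}$ for a closed convex cone $\mathcal K\subseteq\mathbb R^n$. *)

(* Defs.v *)
From Stdlib Require Import Reals.
From mathcomp Require Import all_boot.
Set Implicit Arguments. Unset Strict Implicit.

Local Open Scope R_scope.

Definition vec (n : nat) := 'I_n -> R.
Definition mat (m n : nat) := 'I_m -> 'I_n -> R.

Definition sumR (n : nat) (f : 'I_n -> R) : R := \big[Rplus/0]_(i < n) f i.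
Definition dot (n : nat) (x y : vec n) : R := sumR (fun i => x i * y i).
Definition mv (m n : nat) (A : mat m n) (x : vec n) : vec m :=
  fun i => sumR (fun j => A i j * x j).
Definition mm (m n p : nat) (A : mat m n) (B : mat n p) : mat m p :=
  fun i l => sumR (fun j => A i j * B j l).
Definition trm (m n : nat) (A : mat m n) : mat n m := fun j i => A i j.

Definition vge (n : nat) (x y : vec n) : Prop := forall i, y i <= x i.

(* first standard basis vector e_1 of R^k (index 0) *)
Definition e1 (k : nat) : vec k := fun i => if (val i == 0)%N then 1 else 0.

Definition quad (n : nat) (M : mat n n) (z : vec n) : R := dot z (mv M z).
Definition COP (n : nat) (K : vec n -> Prop) (M : mat n n) : Prop :=
  forall z, K z -> 0 <= quad M z.

Definition vconv (n : nat) (s : nat -> vec n) (u : vec n) : Prop :=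
  forall i, Un_cv (fun p => s p i) (u i).
Definition vclosed (n : nat) (S : vec n -> Prop) : Prop :=
  forall (s : nat -> vec n) u, (forall p, S (s p)) -> vconv s u -> S u.
Definition vbounded (n : nat) (S : vec n -> Prop) : Prop :=
  exists M, forall u, S u -> forall i, Rabs (u i) <= M.
(* compact subsets of R^n = closed and bounded (Heine-Borel) *)
Definition vcompact (n : nat) (S : vec n -> Prop) : Prop :=
  vclosed S /\ vbounded S.
Definition vconvex (n : nat) (S : vec n -> Prop) : Prop :=
  forall u v t, S u -> S v -> 0 <= t <= 1 ->
    S (fun i => t * u i + (1 - t) * v i).
Definition vcone (n : nat) (S : vec n -> Prop) : Prop :=
  forall u t, S u -> 0 <= t -> S (fun i => t * u i).
Definition vfull_dim (n : nat) (S : vec n -> Prop) : Prop :=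
  exists u eps, 0 < eps /\ forall v, (forall i, Rabs (v i - u i) < eps) -> S v.

(* extended reals and the (extended-valued) infimum of a set of reals,
   with the convention inf(empty) = +infinity *)
Inductive ER : Type := Fin (r : R) | PInf | NInf.
Definition is_inf (S : R -> Prop) (v : ER) : Prop :=
  match v with
  | Fin r => (forall x, S x -> r <= x) /\
             (forall r', (forall x, S x -> r' <= x) -> r' <= r)
  | PInf => forall x, ~ S x
  | NInf => forall M, exists x, S x /\ x < M
  end.

Definition Uset (k : nat) (Uhat : vec k -> Prop) (u : vec k) : Prop :=
  Uhat u /\ forall i : 'I_k, val i = 0%N -> u i = 1.

(* (RLP): objective values c^T x + sup_{u in U} d^T y(u) over feasible (x, y);
   points where the sup is +infinity contribute the value +infinity and are
   hence omitted from the value set. *)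
Definition RLP_vals (m n1 n2 k : nat) (A : mat m n1) (B : mat m n2)
  (c : vec n1) (d : vec n2) (F : mat m k) (X : vec n1 -> Prop)
  (Uhat : vec k -> Prop) (v : R) : Prop :=
  exists (x : vec n1) (y : vec k -> vec n2) (s : R),
    X x /\
    (forall u, Uset Uhat u -> vge (fun i => mv A x i + mv B (y u) i) (mv F u)) /\
    is_lub (fun t => exists u, Uset Uhat u /\ t = dot d (y u)) s /\
    v = dot c x + s.

Definition RLP_feasible (m n1 n2 k : nat) (A : mat m n1) (B : mat m n2)
  (F : mat m k) (X : vec n1 -> Prop) (Uhat : vec k -> Prop) : Prop :=
  exists (x : vec n1) (y : vec k -> vec n2),
    X x /\
    forall u, Uset Uhat u -> vge (fun i => mv A x i + mv B (y u) i) (mv F u).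

Definition Aff_vals (m n1 n2 k : nat) (A : mat m n1) (B : mat m n2)
  (c : vec n1) (d : vec n2) (F : mat m k) (X : vec n1 -> Prop)
  (Uhat : vec k -> Prop) (v : R) : Prop :=
  exists (x : vec n1) (Y : mat n2 k) (s : R),
    X x /\
    (forall u, Uset Uhat u -> vge (fun i => mv A x i + mv B (mv Y u) i) (mv F u)) /\
    is_lub (fun t => exists u, Uset Uhat u /\ t = dot d (mv Y u)) s /\
    v = dot c x + s.

(* block matrices in S^{k+m}: index i : 'I_(k+m) splits as inl ('I_k) / inr ('I_m) *)
Definition Wmat (m n1 k : nat) (A : mat m n1) (F : mat m k) (x : vec n1) : mat m k :=
  fun b a => F b a - mv A x b * e1 a.

Definition Gmat (m n1 k : nat) (A : mat m n1) (F : mat m k) (x : vec n1)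
  : mat (k + m) (k + m) :=
  fun i j =>
    match split i, split j with
    | inl a, inr b => trm (Wmat A F x) a b
    | inr b, inl a => Wmat A F x b a
    | _, _ => 0
    end.

Definition Hmat (m n2 k : nat) (B : mat m n2) (d : vec n2) (Y : mat n2 k)
  : mat (k + m) (k + m) :=
  let dY : vec k := fun a => sumR (fun j => d j * Y j a) in   (* (d^T Y)^T = Y^T d *)
  let BY := mm B Y in
  fun i j =>
    match split i, split j with
    | inl a, inl a' => - (e1 a * dY a') - dY a * e1 a'
    | inl a, inr b => trm BY a b
    | inr b, inl a => BY b a
    | inr _, inr _ => 0
    end.

(* g1 g1^T with g1 = (e1; 0) *)
Definition g1g1T (m k : nat) : mat (k + m) (k + m) :=
  fun i j =>
    match split i, split j with
    | inl a, inl a' => e1 a * e1 a'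
    | _, _ => 0
    end.

Definition UhatRplus (m k : nat) (Uhat : vec k -> Prop) (z : vec (k + m)) : Prop :=
  Uhat (fun a => z (lshift m a)) /\ forall b : 'I_m, 0 <= z (rshift k b).

Definition AffBar_vals (m n1 n2 k : nat) (A : mat m n1) (B : mat m n2)
  (c : vec n1) (d : vec n2) (F : mat m k) (X : vec n1 -> Prop)
  (Uhat : vec k -> Prop) (v : R) : Prop :=
  exists (x : vec n1) (lam : R) (Y : mat n2 k),
    X x /\
    COP (@UhatRplus m k Uhat)
      (fun i j => lam * @g1g1T m k i j - / 2 * Gmat A F x i j + / 2 * Hmat B d Y i j) /\
    v = dot c x + lam.

(* Main.v *)
From HB Require Import structures.
Require Import Defs.
From Stdlib Require Import Reals Lra FunctionalExtensionality.
From mathcomp Require Import all_boot.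
Local Open Scope R_scope.
Set Implicit Arguments. Unset Strict Implicit.

Lemma Rplus_assoc' : associative Rplus. Proof. move=> *; ring. Qed.
Lemma Rplus_comm' : commutative Rplus. Proof. move=> *; ring. Qed.
Lemma Rplus_0_l' : left_id 0 Rplus. Proof. move=> *; ring. Qed.
HB.instance Definition _ := Monoid.isComLaw.Build R 0 Rplus Rplus_assoc' Rplus_comm' Rplus_0_l'.

Lemma sumR_ext n (f g : 'I_n -> R) : (forall i, f i = g i) -> sumR f = sumR g.
Proof. move=> H; rewrite /sumR; apply: eq_bigr => i _; exact: H. Qed.
Arguments sumR_ext {n} f g _.
Lemma sumR_add n (f g : 'I_n -> R) : sumR (fun i => f i + g i) = sumR f + sumR g.
Proof. by rewrite /sumR big_split. Qed.
Lemma sumR_scal n a (f : 'I_n -> R) : sumR (fun i => a * f i) = a * sumR f.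
Proof.
rewrite /sumR; symmetry; apply: (big_endo (fun x => a * x)).
  by move=> x y; rewrite Rmult_plus_distr_l.
by rewrite Rmult_0_r.
Qed.
Lemma sumR_0 n : sumR (fun _ : 'I_n => 0) = 0.
Proof. by rewrite /sumR big1. Qed.
Lemma sumR_swap n p (f : 'I_n -> 'I_p -> R) :
  sumR (fun i => sumR (fun j => f i j)) = sumR (fun j => sumR (fun i => f i j)).
Proof. by rewrite /sumR exchange_big. Qed.
Lemma sumR_split n p (f : 'I_(n+p) -> R) :
  sumR f = sumR (fun a => f (lshift p a)) + sumR (fun b => f (rshift n b)).
Proof. by rewrite /sumR big_split_ord. Qed.
Lemma sumR_ge0 n (f : 'I_n -> R) : (forall i, 0 <= f i) -> 0 <= sumR f.
Proof.
move=> H; rewrite /sumR; apply: (big_ind (fun x => 0 <= x)).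
- lra.
- move=> x y; lra.
- move=> i _; exact: H.
Qed.
Lemma sumR_single n (f : 'I_n -> R) b : (forall i, i <> b -> f i = 0) -> sumR f = f b.
Proof.
move=> H; rewrite /sumR (bigD1 b) //= big1 ?Rplus_0_r // => i /eqP; exact: H.
Qed.
Lemma split_l n p (a : 'I_n) : split (lshift p a) = inl a.
Proof. exact: (unsplitK (inl a)). Qed.
Lemma split_r n p (b : 'I_p) : split (rshift n b) = inr b.
Proof. exact: (unsplitK (inr b)). Qed.

Section Q.
Variables (m n1 n2 k : nat) (A : mat m n1) (B : mat m n2) (d : vec n2) (F : mat m k).
Variables (x : vec n1) (lam : R) (Y : mat n2 k).

Definition Mm : mat (k+m) (k+m) := fun i j =>
  lam * @g1g1T m k i j - / 2 * Gmat A F x i j + / 2 * Hmat B d Y i j.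
Definition dYv : vec k := fun a => sumR (fun j => d j * Y j a).

Lemma M_ll a a' : Mm (lshift m a) (lshift m a') =
  lam * (@e1 k a * @e1 k a') + /2 * (-(@e1 k a * dYv a') - dYv a * @e1 k a').
Proof. rewrite /Mm /g1g1T /Gmat /Hmat /= !split_l /dYv; ring. Qed.
Lemma M_lr a b : Mm (lshift m a) (rshift k b) =
  /2 * (mm B Y b a - Wmat A F x b a).
Proof. rewrite /Mm /g1g1T /Gmat /Hmat /= split_l split_r /trm; ring. Qed.
Lemma M_rl a b : Mm (rshift k b) (lshift m a) =
  /2 * (mm B Y b a - Wmat A F x b a).
Proof. rewrite /Mm /g1g1T /Gmat /Hmat /= split_l split_r /trm; ring. Qed.
Lemma M_rr b b' : Mm (rshift k b) (rshift k b') = 0.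
Proof. rewrite /Mm /g1g1T /Gmat /Hmat /= !split_r; ring. Qed.

Lemma quad_formula (z : vec (k+m)) :
  let u := fun a => z (lshift m a) in
  let w := fun b => z (rshift k b) in
  let s := dot (@e1 k) u in
  quad Mm z = lam * s * s - s * dot d (mv Y u) +
    sumR (fun b => w b * (mv A x b * s + mv B (mv Y u) b - mv F u b)).
Proof.
move=> u w s.
set t := sumR (fun a => dYv a * u a).
have Ht : t = dot d (mv Y u).
  rewrite /t /dot /mv /dYv.
  rewrite (sumR_ext _ (fun a => sumR (fun j => d j * Y j a * u a))); last first.
    move=> a; rewrite Rmult_comm -sumR_scal; apply: sumR_ext => j; ring.
  rewrite sumR_swap; apply: sumR_ext => j; rewrite -sumR_scal; apply: sumR_ext => a; ring.
set P3 := fun b => sumR (fun a => /2 * (mm B Y b a - Wmat A F x b a) * u a).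
have HP3 : forall b, 2 * P3 b = mv A x b * s + mv B (mv Y u) b - mv F u b.
  move=> b; rewrite /P3 -sumR_scal /s /dot /mv /mm /Wmat.
  rewrite (sumR_ext _ (fun a => sumR (fun j => B b j * Y j a) * u a
     + (mv A x b * (@e1 k a * u a) - F b a * u a))); last first.
    move=> a; rewrite /mv; field.
  rewrite sumR_add.
  rewrite (sumR_ext _ (fun a => sumR (fun j => B b j * Y j a * u a))); last first.
    move=> a; rewrite Rmult_comm -sumR_scal; apply: sumR_ext => j; ring.
  rewrite sumR_swap.
  rewrite (sumR_ext _ (fun a => mv A x b * (@e1 k a * u a) + (-1) * (F b a * u a))); last first.
    move=> a; ring.
  rewrite sumR_add sumR_scal sumR_scal /mv.
  rewrite (sumR_ext (fun j => sumR (fun a => B b j * Y j a * u a)) (fun j => B b j * sumR (fun a => Y j a * u a))); last first.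
    move=> j; rewrite -sumR_scal; apply: sumR_ext => a; ring.
  ring.
have Hs : s = sumR (fun a => @e1 k a * u a) by [].
rewrite /quad /dot.
rewrite (sumR_ext _ (fun i => z i * (sumR (fun a => Mm i (lshift m a) * u a) + sumR (fun b => Mm i (rshift k b) * w b)))); last first.
  by move=> i; rewrite /mv sumR_split.
rewrite sumR_split.
rewrite (sumR_ext (fun b => z (rshift k b) * (sumR (fun a => Mm (rshift k b) (lshift m a) * u a) +
      sumR (fun b0 => Mm (rshift k b) (rshift k b0) * w b0))) (fun b => w b * P3 b)); last first.
  move=> b; rewrite /P3 (sumR_ext _ (fun b0 => 0 * w b0)); last by move=> b0; rewrite M_rr.
  rewrite sumR_scal Rmult_0_l Rplus_0_r /w; congr (_ * _); apply: sumR_ext => a; by rewrite M_rl.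
rewrite (sumR_ext (fun a => z (lshift m a) * (sumR (fun a0 => Mm (lshift m a) (lshift m a0) * u a0) +
      sumR (fun b => Mm (lshift m a) (rshift k b) * w b)))
   (fun a => (lam * s - /2 * t) * (@e1 k a * u a) + (-/2 * s) * (dYv a * u a) +
      sumR (fun b => w b * (/2 * (mm B Y b a - Wmat A F x b a) * u a)))); last first.
  move=> a.
  rewrite (sumR_ext (fun a0 => Mm (lshift m a) (lshift m a0) * u a0)
    (fun a0 => (@e1 k a * lam - /2 * dYv a) * (@e1 k a0 * u a0) + (-/2 * @e1 k a) * (dYv a0 * u a0))); last first.
    move=> a0; rewrite M_ll; ring.
  rewrite sumR_add !sumR_scal -/t -Hs.
  have -> : sumR (fun b => w b * (/2 * (mm B Y b a - Wmat A F x b a) * u a)) =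
     u a * sumR (fun b => Mm (lshift m a) (rshift k b) * w b).
    rewrite -sumR_scal; apply: sumR_ext => b; rewrite M_lr; ring.
  rewrite /u; ring.
rewrite !sumR_add !sumR_scal -/t -Hs sumR_swap.
rewrite (sumR_ext (fun b => sumR (fun a => w b * (/ 2 * (mm B Y b a - Wmat A F x b a) * u a)))
   (fun b => w b * P3 b)); last first.
  by move=> b; rewrite /P3 -sumR_scal; apply: sumR_ext => a; ring.
rewrite (sumR_ext (fun b => w b * (mv A x b * s + mv B (mv Y u) b - mv F u b))
   (fun b => 2 * (w b * P3 b))); last first.
  by move=> b; rewrite -HP3; ring.
rewrite sumR_scal Ht /dot; field.
Qed.

Lemma mv_scal p (M : mat p k) (u u' : vec k) s :
  (forall a, u a = s * u' a) -> forall i, mv M u i = s * mv M u' i.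
Proof. move=> H i; rewrite /mv -sumR_scal; apply: sumR_ext => j; rewrite H; ring. Qed.
Lemma mv_scal' p q (M : mat p q) (u u' : vec q) s :
  (forall a, u a = s * u' a) -> forall i, mv M u i = s * mv M u' i.
Proof. move=> H i; rewrite /mv -sumR_scal; apply: sumR_ext => j; rewrite H; ring. Qed.
Lemma mv_zero p q (M : mat p q) (u : vec q) :
  (forall a, u a = 0) -> forall i, mv M u i = 0.
Proof.
move=> H i; rewrite /mv (sumR_ext _ (fun _ => 0)) ?sumR_0 // => j; rewrite H; ring.
Qed.

Lemma e1_dot (hk : (0 < k)%N) (u : vec k) : dot (@e1 k) u = u (Ordinal hk).
Proof.
rewrite /dot (sumR_single (b := Ordinal hk)).
  by rewrite /e1 /= Rmult_1_l.
move=> i Hi; rewrite /e1; case: eqP => [H|]; last by move=> _; ring.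
by exfalso; apply: Hi; apply: val_inj.
Qed.

Definition joinv (u : vec k) (w : vec m) : vec (k + m) :=
  fun i => match split i with inl a => u a | inr b => w b end.
Lemma joinv_l u w : (fun a => joinv u w (lshift m a)) = u.
Proof. by apply: functional_extensionality => a; rewrite /joinv split_l. Qed.
Lemma joinv_r u w : (fun b => joinv u w (rshift k b)) = w.
Proof. by apply: functional_extensionality => a; rewrite /joinv split_r. Qed.

Lemma quad_join u w :
  quad Mm (joinv u w) = lam * dot (@e1 k) u * dot (@e1 k) u - dot (@e1 k) u * dot d (mv Y u) +
    sumR (fun b => w b * (mv A x b * dot (@e1 k) u + mv B (mv Y u) b - mv F u b)).
Proof.
rewrite quad_formula /= joinv_l; congr (_ + _); apply: sumR_ext => b; by rewrite /joinv split_r.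
Qed.

End Q.

Section C.
Variables (m n1 n2 k : nat) (A : mat m n1) (B : mat m n2) (d : vec n2) (F : mat m k).
Variables (x : vec n1) (lam : R) (Y : mat n2 k) (Uhat : vec k -> Prop).
Hypothesis hk : (0 < k)%N.
Hypothesis hUv : vconvex Uhat.
Hypothesis hUcone : vcone Uhat.
Hypothesis hUpos : forall u, Uhat u -> forall i : 'I_k, val i = 0%N -> 0 <= u i.
Hypothesis hUne : exists u, Uset Uhat u.
Hypothesis hUb : vbounded (Uset Uhat).

Lemma Uset_e1 u : Uset Uhat u -> dot (@e1 k) u = 1.
Proof. by move=> [_ H]; rewrite (e1_dot hk); apply: H. Qed.

Lemma zero_slice u : Uhat u -> u (Ordinal hk) = 0 -> forall a, u a = 0.
Proof.
move=> Hu H0 a; case: (Req_dec (u a) 0) => // Hne; exfalso.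
case: hUne => u0 Hu0; case: hUb => M HM.
have HM0 := HM u0 Hu0 a.
have Hpos : 0 < Rabs (u a) by apply: Rabs_pos_lt.
set T := (M + Rabs (u0 a) + 1) / Rabs (u a).
have HT : 0 <= T.
  rewrite /T; apply: Rmult_le_pos; last by left; apply: Rinv_0_lt_compat.
  have := Rabs_pos (u0 a); lra.
have H1 : Uhat (fun i => T * u i).
  by apply: (@hUcone u T Hu); lra.
have H2 : Uhat (fun i => / 2 * u0 i + (1 - / 2) * (T * u i)).
  by apply: (@hUv u0 (fun i => T * u i) (/2) Hu0.1 H1); lra.
have H3 : Uhat (fun i => 2 * (/ 2 * u0 i + (1 - / 2) * (T * u i))).
  by apply: (@hUcone _ 2 H2); lra.
set v := fun i => u0 i + T * u i.
have Hv : Uhat v.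
  have -> : v = (fun i => 2 * (/ 2 * u0 i + (1 - / 2) * (T * u i))).
    by apply: functional_extensionality => i; rewrite /v; field.
  exact: H3.
have HvU : Uset Uhat v.
  split => // i Hi.
  have -> : i = Ordinal hk by apply: val_inj.
  by rewrite /v H0 Hu0.2 //; ring.
have HMv := HM v HvU a.
have HTa : Rabs (T * u a) = M + Rabs (u0 a) + 1.
  rewrite Rabs_mult (Rabs_pos_eq T HT) /T; field; lra.
have Htri : Rabs (T * u a) <= Rabs (v a) + Rabs (u0 a).
  have -> : T * u a = v a + - u0 a by rewrite /v; ring.
  by rewrite -(Rabs_Ropp (u0 a)); apply: Rabs_triang.
lra.
Qed.

Lemma join_split (z : vec (k + m)) :
  z = joinv (fun a => z (lshift m a)) (fun b => z (rshift k b)).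
Proof.
apply: functional_extensionality => i; rewrite /joinv.
by case: split_ordP => [a ->|b ->]; rewrite ?split_l ?split_r.
Qed.

Lemma quad_pos u w : Uhat u -> (forall b, 0 <= w b) ->
  (forall u, Uset Uhat u -> vge (fun i => mv A x i + mv B (mv Y u) i) (mv F u)) ->
  (forall u, Uset Uhat u -> dot d (mv Y u) <= lam) ->
  0 <= quad (Mm A B d F x lam Y) (joinv u w).
Proof.
move=> Hu Hw Hf Hb; rewrite quad_join.
set s := dot (@e1 k) u.
have Hs : s = u (Ordinal hk) by rewrite /s (e1_dot hk).
have Hs0 : 0 <= s by rewrite Hs; apply: (hUpos Hu).
case: (Req_dec s 0) => [H0|Hn0].
  have Hz := zero_slice Hu (eq_trans (esym Hs) H0).
  have HY := mv_zero Y Hz.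
  have HBY := mv_zero B HY.
  have HF := mv_zero F Hz.
  have Hd : dot d (mv Y u) = 0.
    rewrite /dot (sumR_ext _ (fun _ => 0)) ?sumR_0 // => j; rewrite HY; ring.
  rewrite H0 Hd (sumR_ext _ (fun _ => 0)) ?sumR_0; first lra.
  by move=> b; rewrite HBY HF; ring.
have Hsp : 0 < s by lra.
set u' := fun a => / s * u a.
have Hu' : Uset Uhat u'.
  split; first by apply: (@hUcone u (/ s) Hu); left; apply: Rinv_0_lt_compat.
  move=> i Hi; have -> : i = Ordinal hk by apply: val_inj.
  by rewrite /u' -Hs; field.
have Hq : forall a, u a = s * u' a by move=> a; rewrite /u'; field.
have HY := mv_scal Y Hq.
have HBY := mv_scal' B HY.
have HF := mv_scal F Hq.
have Hd : dot d (mv Y u) = s * dot d (mv Y u').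
  rewrite /dot -sumR_scal; apply: sumR_ext => j; rewrite HY; ring.
rewrite Hd (sumR_ext _ (fun b => s * (w b * (mv A x b + mv B (mv Y u') b - mv F u' b)))); last first.
  by move=> b; rewrite HBY HF; ring.
rewrite sumR_scal.
have H1 := Hb u' Hu'.
have H2 : 0 <= sumR (fun b => w b * (mv A x b + mv B (mv Y u') b - mv F u' b)).
  apply: sumR_ge0 => b; apply: Rmult_le_pos => //; have := Hf u' Hu' b; simpl; lra.
have -> : lam * s * s - s * (s * dot d (mv Y u')) +
   s * sumR (fun b => w b * (mv A x b + mv B (mv Y u') b - mv F u' b)) =
   s * s * (lam - dot d (mv Y u')) + s * sumR (fun b => w b * (mv A x b + mv B (mv Y u') b - mv F u' b)) by ring.
apply: Rplus_le_le_0_compat; apply: Rmult_le_pos => //; try lra.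
by apply: Rmult_le_pos; lra.
Qed.

Lemma cop_iff :
  COP (@UhatRplus m k Uhat) (Mm A B d F x lam Y) <->
  (forall u, Uset Uhat u -> vge (fun i => mv A x i + mv B (mv Y u) i) (mv F u)) /\
  (forall u, Uset Uhat u -> dot d (mv Y u) <= lam).
Proof.
split.
  move=> Hc.
  have Hq : forall u w, Uset Uhat u -> (forall b, 0 <= w b) ->
    0 <= lam - dot d (mv Y u) + sumR (fun b => w b * (mv A x b + mv B (mv Y u) b - mv F u b)).
    move=> u w Hu Hw.
    have := Hc (joinv u w); rewrite quad_join (Uset_e1 Hu).
    rewrite (sumR_ext (fun b => w b * (mv A x b * 1 + mv B (mv Y u) b - mv F u b))
       (fun b => w b * (mv A x b + mv B (mv Y u) b - mv F u b))); last by move=> b; ring.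
    have -> : lam * 1 * 1 - 1 * dot d (mv Y u) = lam - dot d (mv Y u) by ring.
    apply; split; first by rewrite joinv_l; exact: Hu.1.
    by move=> b; rewrite /joinv split_r.
  have Hq0 : forall u, Uset Uhat u -> dot d (mv Y u) <= lam.
    move=> u Hu; have := Hq u (fun _ => 0) Hu (fun _ => Rle_refl 0).
    rewrite (sumR_ext _ (fun _ => 0)) ?sumR_0; first lra.
    by move=> b; ring.
  split => // u Hu b /=.
  case: (Rle_lt_dec (mv F u b) (mv A x b + mv B (mv Y u) b)) => // Hlt; exfalso.
  set r := mv A x b + mv B (mv Y u) b - mv F u b.
  have Hr : 0 < - r by rewrite /r; lra.
  set D := lam - dot d (mv Y u).
  set T := (Rabs D + 1) / (- r).
  have HT : 0 <= T.
    rewrite /T; apply: Rmult_le_pos; last by left; apply: Rinv_0_lt_compat.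
    have := Rabs_pos D; lra.
  have := Hq u (fun b' => if b' == b then T else 0) Hu.
  rewrite (sumR_single (b := b)); last first.
    by move=> i Hi /=; case: eqP => // _; ring.
  rewrite /= eqxx -/r.
  have -> : T * r = - (Rabs D + 1) by rewrite /T; field; lra.
  have := Rle_abs D => HD H; have : 0 <= D + - (Rabs D + 1).
    apply: H => b' /=; case: eqP => _; lra.
  lra.
move=> [Hf Hb] z [Hz Hw].
rewrite (join_split z); apply: quad_pos => //.
Qed.

End C.
Lemma inf_equiv (S1 S2 : R -> Prop) : (forall v, S2 v -> S1 v) ->
  (forall v, S1 v -> exists v', S2 v' /\ v' <= v) ->
  forall e, is_inf S1 e <-> is_inf S2 e.
Proof.
move=> Hsub Hdom [r| |] /=.
- split; move=> [H1 H2]; split.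
  + by move=> y Hy; apply: H1; apply: Hsub.
  + move=> r' Hr'; apply: H2 => y Hy; have [v' [Hv' Hle]] := Hdom y Hy.
    have := Hr' v' Hv'; lra.
  + move=> y Hy; have [v' [Hv' Hle]] := Hdom y Hy; have := H1 v' Hv'; lra.
  + by move=> r' Hr'; apply: H2 => y Hy; apply: Hr'; apply: Hsub.
- split=> H y Hy.
  + by apply: (H y); apply: Hsub.
  + by have [v' [Hv' _]] := Hdom y Hy; apply: (H v').
- split=> H M.
  + have [y [Hy HM]] := H M; have [v' [Hv' Hle]] := Hdom y Hy.
    exists v'; split => //; lra.
  + by have [y [Hy HM]] := H M; exists y; split => //; apply: Hsub.
Qed.

Unset Implicit Arguments.
Set Strict Implicit.
Theorem proposition2 (m n1 n2 k : nat) (hk : (0 < k)%N)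
  (A : mat m n1) (B : mat m n2) (c : vec n1) (d : vec n2) (F : mat m k)
  (X : vec n1 -> Prop) (Uhat : vec k -> Prop)
  (hXc : vclosed X) (hXv : vconvex X)
  (hUc : vclosed Uhat) (hUv : vconvex Uhat) (hUcone : vcone Uhat)
  (hUfd : vfull_dim Uhat)
  (hUpos : forall u, Uhat u -> forall i : 'I_k, val i = 0%N -> 0 <= u i)
  (hUne : exists u, Uset Uhat u) (hUcomp : vcompact (Uset Uhat))
  (hA2 : RLP_feasible A B F X Uhat)
  (hA3 : exists r : R, is_inf (RLP_vals A B c d F X Uhat) (Fin r)) :
  forall v : ER,
    is_inf (AffBar_vals A B c d F X Uhat) v <-> is_inf (Aff_vals A B c d F X Uhat) v.
Proof.
have hUb := hUcomp.2.
apply: inf_equiv.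
  move=> v [x [Y [s [HX [Hf [Hlub ->]]]]]].
  exists x, s, Y; split => //; split => //.
  apply: (proj2 (cop_iff A B d F x s Y hk hUv hUcone hUpos hUne hUb)); split => //.
  move=> u Hu; apply: Hlub.1; by exists u.
move=> v [x [lam [Y [HX [Hc ->]]]]].
have [Hf Hb] := proj1 (cop_iff A B d F x lam Y hk hUv hUcone hUpos hUne hUb) Hc.
set E := fun t => exists u, Uset Uhat u /\ t = dot d (mv Y u).
have HE1 : bound E by exists lam => t [u [Hu ->]]; apply: Hb.
have HE2 : exists t, E t by case: hUne => u Hu; exists (dot d (mv Y u)), u.
case: (completeness E HE1 HE2) => s Hs.
exists (dot c x + s); split.
  by exists x, Y, s.
have : s <= lam by apply: Hs.2 => t [u [Hu ->]]; apply: Hb.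
lra.
Qed.
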